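(* Let $A$ be a regular ring and $S$ a metrizable subset of an $A$-module $M$. Then the set $\mathrm{conv}(S)=\{a_{1}x_{1}+\cdots+a_{n}x_{n}: n\ge1,\ x_{i}\in S,\ a_{i}\in B(A),\ a_1\oplus\cdots\oplus a_n=1\}$ is also a metrizable subset of $M$.
   Context: A regular ring is a commutative (unital) von Neumann regular ring. $B(A)$ is the set of idempotents of $A$; for pairwise disjoint idempotents $a_1,\dots,a_n$ ($a_ia_j=0$ for $i\ne j$), $a_1\oplus\cdots\oplus a_n$ denotes their sum. A subset $S$ of an $A$-module is metrizable if for all $x,y\in S$ the annihilator $\mathrm{Ann}(x-y)=\{a\in A: a(x-y)=0\}$ is a principal ideal of $A$. *)

(* Defs.v *)
From HB Require Import structures.
From mathcomp Require Import all_boot all_order all_algebra.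
Set Implicit Arguments. Unset Strict Implicit. Unset Printing Implicit Defensive.
Import GRing.Theory.
Local Open Scope ring_scope.

Definition regular_ring (A : comPzRingType) : Prop :=
  forall a : A, exists x : A, a = a * a * x.

Definition idempotent (A : comPzRingType) (a : A) : Prop := a * a = a.

Definition ann_principal (A : comPzRingType) (M : lmodType A) (v : M) : Prop :=
  exists g : A, forall a : A, a *: v = 0 <-> exists r : A, a = r * g.

Definition metrizable (A : comPzRingType) (M : lmodType A) (S : M -> Prop) : Prop :=
  forall x y : M, S x -> S y -> ann_principal (x - y).

Definition conv (A : comPzRingType) (M : lmodType A) (S : M -> Prop) (z : M) : Prop :=
  exists (n : nat) (a : 'I_n -> A) (x : 'I_n -> M),
    (1 <= n)%N /\
    (forall i, S (x i)) /\
    (forall i, idempotent (a i)) /\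
    (forall i j, i != j -> a i * a j = 0) /\
    \sum_(i < n) a i = 1 /\
    z = \sum_(i < n) a i *: x i.

(* Main.v *)
Require Import Defs.
From HB Require Import structures.
From mathcomp Require Import all_boot all_order all_algebra.
From Stdlib Require Import ClassicalEpsilon.
Set Implicit Arguments. Unset Strict Implicit. Unset Printing Implicit Defensive.
Import GRing.Theory.
Local Open Scope ring_scope.

Lemma idem_gen (A : comPzRingType) (M : lmodType A) (v : M) :
  regular_ring A -> ann_principal v ->
  exists e : A, e * e = e /\ forall a, a *: v = 0 <-> a * e = a.
Proof.
move=> reg [g Hg]; have [x Hx] := reg g.
exists (g * x); split.
  by rewrite mulrA -[g * x * g]mulrC !mulrA -Hx.
move=> a; rewrite Hg; split.
  move=> [r ->]; by rewrite -[r * g * (g * x)]mulrA [g * (g * x)]mulrA -Hx.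
move=> <-; exists (a * x); by rewrite -mulrA [x * g]mulrC mulrA.
Qed.

Lemma key (A : comPzRingType) (M : lmodType A) (I : finType)
  (c : I -> A) (u : I -> M) (v : M) :
  regular_ring A -> \sum_k c k = 1 ->
  (forall k, c k *: v = c k *: u k) -> (forall k, ann_principal (u k)) ->
  ann_principal v.
Proof.
move=> reg Hc Hcu Hu.
have He : forall k, exists e : A, e * e = e /\ forall a, a *: u k = 0 <-> a * e = a.
  by move=> k; apply: idem_gen.
pose e k := proj1_sig (constructive_indefinite_description _ (He k)).
have eP : forall k, e k * e k = e k /\ forall a, a *: u k = 0 <-> a * e k = a.
  by move=> k; rewrite /e; case: constructive_indefinite_description.
exists (\sum_k c k * e k) => a; split.
  move=> Hav; exists a.
  have Hk : forall k, a * c k * e k = a * c k.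
    move=> k; apply/(proj2 (eP k)).
    by rewrite -scalerA -Hcu scalerA mulrC -scalerA Hav scaler0.
  rewrite mulr_sumr -{1}[a]mulr1 -Hc mulr_sumr.
  by apply: eq_bigr => k _; rewrite mulrA Hk.
move=> [r ->]; rewrite -scalerA.
have -> : (\sum_k c k * e k) *: v = 0.
  rewrite scaler_suml; apply: big1 => k _.
  rewrite mulrC -scalerA Hcu scalerA mulrC -scalerA.
  have -> : e k *: u k = 0 by apply/(proj2 (eP k)); exact: (proj1 (eP k)).
  by rewrite scaler0.
by rewrite scaler0.
Qed.

Lemma pick_sum (A : comPzRingType) (M : lmodType A) n (a : 'I_n -> A) (x : 'I_n -> M) i :
  (forall i, Defs.idempotent (a i)) -> (forall i j, i != j -> a i * a j = 0) ->
  a i *: \sum_(k < n) a k *: x k = a i *: x i.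
Proof.
move=> Hid Hor; rewrite scaler_sumr (bigD1 i) //= scalerA Hid big1 ?addr0 //.
by move=> k Hk; rewrite scalerA Hor ?scale0r // eq_sym.
Qed.

Theorem mainTheorem17 (A : comPzRingType) (M : lmodType A) (S : M -> Prop) :
  regular_ring A -> metrizable S -> metrizable (conv S).
Proof.
move=> reg HS z w [n [a [x [_ [Sx [ia [oa [sa ->]]]]]]]]
  [m [b [y [_ [Sy [ib [ob [sb ->]]]]]]]].
apply: (@key _ _ _ (fun p : 'I_n * 'I_m => a p.1 * b p.2)
  (fun p => x p.1 - y p.2)) => //.
- rewrite -(pair_big xpredT xpredT (fun i j => a i * b j)) /=.
  rewrite -[1]mulr1 -{1}sa -sb mulr_suml; apply: eq_bigr => i _.
  by rewrite mulr_sumr.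
- move=> [i j] /=; rewrite !scalerBr.
  rewrite -[(a i * b j) *: \sum_(i0 < m) _]scalerA.
  rewrite [a i * b j]mulrC -[(b j * a i) *: \sum_(i0 < n) _]scalerA.
  by rewrite !pick_sum // !scalerA mulrC.
- by move=> [i j]; apply: HS.
Qed.
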